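(* Let $\mathcal{V}$ be a commutative associative $\mathbb{C}$-algebra which is a domain, equipped with two commuting $\mathbb{C}$-linear derivations $\partial_1,\partial_2$, and let $a\in\mathcal{V}$ and $\mathcal{H}_a=\partial_1\partial_2+a$. For every $\mathcal{P}\in\mathcal{V}[\partial_2]((\partial_1^{-1}))$ there exists a unique $\mathcal{Q}\in\mathcal{V}[\partial_2]((\partial_1^{-1}))$ such that $\mathcal{P}-\mathcal{Q}\mathcal{H}_a\in\mathcal{V}((\partial_1^{-1}))$. The same holds with the roles of $\partial_1$ and $\partial_2$ exchanged.
   Context: $\mathcal{V}[\partial_2]((\partial_1^{-1}))$ denotes the algebra of formal pseudodifferential operators $\sum_{n\le N} p_n\partial_1^n$ with coefficients $p_n\in\mathcal{V}[\partial_2]$ (polynomials in $\partial_2$ with coefficients in $\mathcal{V}$), with multiplication determined by $\partial_i v=v\partial_i+\partial_i(v)$, $\partial_1\partial_2=\partial_2\partial_1$, and $\partial_1^{-1}v=v\partial_1^{-1}-\partial_1(v)\partial_1^{-2}+\partial_1^2(v)\partial_1^{-3}-\cdots$ for $v\in\mathcal{V}$. $\mathcal{V}((\partial_1^{-1}))$ is the subalgebra of such operators not involving $\partial_2$. *)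

(* Defs.v *)
From mathcomp Require Import all_boot all_algebra.
From mathcomp Require Import reals complex.
From mathcomp Require Import boolp classical_sets fsbigop.

Set Implicit Arguments.
Unset Strict Implicit.
Unset Printing Implicit Defensive.
Import GRing.Theory Num.Theory.
Local Open Scope ring_scope.

(* Generalized binomial coefficient binom(n, k) for n : int, k : nat,
   i.e. n(n-1)...(n-k+1)/k!.  For n = Negz p = -(p+1) this equals
   (-1)^k * binom(p+k, k). *)
Definition binz (n : int) (k : nat) : int :=
  match n with
  | Posz p => ('C(p, k))%:Z
  | Negz p => (-1) ^+ k * ('C(p + k, k))%:Z
  end.

Section PDO.
Variable (R : realType) (V : comAlgType R[i]).

(* An element of V[d2]((d1^-1)) is represented by its coefficient function:
   c n m is the coefficient of  d2^m d1^n  (normal form  sum c n m d2^m d1^n,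
   coefficients on the left; d1 and d2 commute). *)
Definition pdo := int -> nat -> V.

(* c really is an element of V[d2]((d1^-1)):
   bounded above in d1, and each coefficient of d1^n is a polynomial in d2. *)
Definition is_pdo (c : pdo) : Prop :=
  (exists N : int, forall n m, N < n -> c n m = 0) /\
  (forall n : int, exists M : nat, forall m, (M < m)%N -> c n m = 0).

Definition in_Vd1 (c : pdo) : Prop := forall n m, (0 < m)%N -> c n m = 0.

Definition pdo_sub (P Q : pdo) : pdo := fun n m => P n m - Q n m.

Variables (d1 d2 : V -> V).

(* Product determined by  d_i v = v d_i + d_i(v), d1 d2 = d2 d1 and the
   given expansion of d1^-1 v; in closed form
     d2^m d1^n q = sum_{j,k} C(m,j) C(n,k) d1^k d2^j (q) d2^(m-j) d1^(n-k).
   Coefficient of d2^M d1^N in P*Q, summing over (n,k,m,j) with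
   n' = N - n + k, m' = M - (m - j) (finitely many nonzero terms). *)
Definition pdo_mul (P Q : pdo) : pdo := fun N M =>
  \sum_(i \in [set: int * nat * nat * nat])
    (let: (n, k, m, j) := i in
     if (j <= m)%N && (m - j <= M)%N then
       P n m * ((binz n k * ('C(m, j))%:Z)%:~R)
         * iter k d1 (iter j d2 (Q (N - n + k%:Z) (M - (m - j))%N))
     else 0).

Definition Hop (a : V) : pdo := fun n m =>
  if (n == 1) && (m == 1)%N then 1
  else if (n == 0) && (m == 0)%N then a else 0.

Definition unique_division (a : V) : Prop :=
  forall P : pdo, is_pdo P ->
    exists Q : pdo, [/\ is_pdo Q, in_Vd1 (pdo_sub P (pdo_mul Q (Hop a))) &
      forall Q' : pdo, is_pdo Q' ->
        in_Vd1 (pdo_sub P (pdo_mul Q' (Hop a))) -> Q' = Q].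

End PDO.

Definition is_derivation (R : realType) (V : comAlgType R[i])
  (d : {linear V -> V}) : Prop :=
  forall x y : V, d (x * y) = d x * y + x * d y.

(* Main.v *)
Require Import Defs.
From mathcomp Require Import all_boot all_algebra.
From mathcomp Require Import reals complex.
From mathcomp Require Import boolp classical_sets functions cardinality fsbigop.
From mathcomp Require Import zify.
Set Implicit Arguments.
Unset Strict Implicit.
Unset Printing Implicit Defensive.
Import GRing.Theory Num.Theory.
Local Open Scope ring_scope.
Local Open Scope classical_set_scope.

Section Main.
Variables (R : realType) (V : comAlgType R[i]) (d1 d2 : {linear V -> V}) (a : V).
Hypothesis d1_1 : d1 1 = 0.
Hypothesis d2_1 : d2 1 = 0.

Lemma iter_lin0 (d : {linear V -> V}) k : iter k d 0 = 0.
Proof. by elim: k => //= k ->; rewrite linear0. Qed.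

Lemma iter1 (d : {linear V -> V}) k : d 1 = 0 -> iter k d 1 = if k == 0%N then 1 else 0.
Proof. move=> h; case: k => // k; by rewrite iterSr h iter_lin0. Qed.

Lemma binz0 n : binz n 0 = 1.
Proof. by case: n => p /=; rewrite ?bin0 ?expr0 ?mul1r. Qed.

Definition G (Q : pdo V) (N : int) (M : nat) (kj : nat * nat) : V :=
  Q (N + kj.1%:Z) (M + kj.2)%N * ((binz (N + kj.1%:Z) kj.1 * ('C(M + kj.2, kj.2))%:Z)%:~R)
    * iter kj.1 d1 (iter kj.2 d2 a).

Definition SQ (Q : pdo V) N M := \sum_(kj \in [set: nat * nat]) G Q N M kj.

Lemma unif_bound (Q : pdo V) (N : int) (K : nat) :
  (forall k, (k < K)%N -> exists Mb : nat, forall m, (Mb < m)%N -> Q (N + k%:Z) m = 0) ->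
  exists J : nat, forall k, (k < K)%N -> forall m, (J < m)%N -> Q (N + k%:Z) m = 0.
Proof.
elim: K => [|K IH] h; first by exists 0%N.
have [J HJ] := IH (fun k hk => h k (ltnW hk)).
have [Mb HMb] := h K (ltnSn K).
exists (maxn J Mb) => k hk m hm.
have [hkK|hkK] := ltnP k K.
  by apply: HJ => //; lia.
have -> : k = K by lia.
by apply: HMb; lia.
Qed.

Lemma mulH (Q : pdo V) N M : is_pdo Q ->
  pdo_mul d1 d2 Q (Hop a) N M = (if (0 < M)%N then Q (N - 1) (M - 1)%N else 0) + SQ Q N M.
Proof.
move=> [[B HB] Hrow].
have [J HJ] := unif_bound (N := N) (K := `|B - N|%N.+1) (Q := Q)
   (fun k _ => Hrow (N + k%:Z)).
pose S := `I_(`|B - N|%N.+1) `*` `I_(J.+1 - M)%N.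
have GQ kj : ~ S kj -> Q (N + kj.1%:Z) (M + kj.2)%N = 0.
  case: kj => k j /= nS.
  have [hk|hk] := ltnP k (`|B - N|%N.+1).
    apply: HJ => //.
    have : ~ ((j < J.+1 - M)%N) by move=> hj; apply: nS; split.
    lia.
  apply: HB; lia.
have GS kj : ~ S kj -> G Q N M kj = 0.
  by move=> nS; rewrite /G GQ // !mul0r.
pose h (kj : nat * nat) : int * nat * nat * nat :=
  (N + kj.1%:Z, kj.1, (M + kj.2)%N, kj.2).
pose p1 : int * nat * nat * nat := (N - 1, 0%N, (M - 1)%N, 0%N).
pose F := (fun i : int * nat * nat * nat => let: (n, k, m, j) := i in
     if (j <= m)%N && (m - j <= M)%N then
       Q n m * ((binz n k * ('C(m, j))%:Z)%:~R)
         * iter k d1 (iter j d2 (Hop a (N - n + k%:Z) (M - (m - j))%N))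
     else 0).
have -> : pdo_mul d1 d2 Q (Hop a) N M = \sum_(i \in [set: int * nat * nat * nat]) F i by [].
have finS : finite_set S by apply: finite_setX; apply: finite_II.
have hinj : set_inj S h.
  move=> [k j] [k2 j2] _ _ [] /eqP h1 _ _ ->; congr (_, _); lia.
have Fh kj : F (h kj) = G Q N M kj.
  case: kj => k j; rewrite /F /h /G /= leq_addl addnK leqnn /=.
  have -> : N - (N + k%:Z) + k%:Z = 0 by lia.
  by rewrite subnn /Hop.
have Fp1 : F p1 = if (0 < M)%N then Q (N - 1) (M - 1)%N else 0.
  rewrite /F /p1 /= subn0 leq_subr /= binz0 bin0 mulr1 /=.
  have -> : N - (N - 1) + 0%:Z = 1 by lia.
  clear -d1_1 d2_1; case: M => [|M'] /=.
    by rewrite /Hop /= mulr0.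
  by rewrite subSS subn0 subSnn /Hop /= mulr1.
have Fsupp i : F i != 0 -> i = p1 \/ exists2 kj, S kj & i = h kj.
  case: i => [[[n k] m] j] /=; rewrite /F.
  case: ifP => [/andP [hjm hmj]|]; last by rewrite eqxx.
  rewrite /Hop.
  case: ifP => [/andP [/eqP h1 /eqP h2] | _].
    rewrite iter1 //.
    case: (j =P 0%N) => [hj|]; last by rewrite iter_lin0 mulr0 eqxx.
    rewrite iter1 //.
    case: (k =P 0%N) => [hk|]; last by rewrite mulr0 eqxx.
    move=> _; left; subst k j; rewrite /p1; congr (_, _, _, _); lia.
  case: ifP => [/andP [/eqP h1 /eqP h2] | _]; last by rewrite !iter_lin0 mulr0 eqxx.
  have en : n = N + k%:Z by lia.
  have em : m = (M + j)%N by lia.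
  move=> hF; right; exists (k, j); last by rewrite /h /= en em.
  have [//|nS] := pselect (S (k, j)).
  by move: hF; rewrite en em (GQ _ nS) !mul0r eqxx.
rewrite -(fsbig_widen ([set p1] `|` h @` S) [set: int * nat * nat * nat] F) //; last first.
  move=> i [_ /= nin]; apply: contra_notP nin => /eqP Fi.
  case: (Fsupp i Fi) => [->|[kj Skj ->]]; [by left | by right; exists kj].
rewrite fsbigU0 //; last 2 first.
- exact: finite_image.
- move=> i [/= -> [[k j] _ /=]]; rewrite /p1 /h => -[] /eqP; lia.
rewrite fsbig_set1 fsbig_image // Fp1; congr (_ + _).
rewrite (eq_fsbigr (G Q N M)); last by move=> kj _; exact: Fh.
rewrite /SQ (fsbig_widen S [set: nat * nat]) //.
by move=> kj [_ nS]; apply: GS.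
Qed.

Variable P : pdo V.

Definition E (Q : pdo V) := forall n m, Q n m = P (n + 1) m.+1 - SQ Q (n + 1) m.+1.

Lemma eqn_iff Q : is_pdo Q ->
  in_Vd1 (pdo_sub P (pdo_mul d1 d2 Q (Hop a))) <-> E Q.
Proof.
move=> pQ; split.
  move=> h n m; have := h (n + 1) m.+1 (ltn0Sn m).
  rewrite /pdo_sub mulH // /= subn1 /= addrK => /eqP.
  by rewrite subr_eq0 => /eqP ->; rewrite addrK.
move=> h N M hM; rewrite /pdo_sub mulH // hM.
case: M hM => // m _; rewrite subn1 /= h subrK.
by rewrite subrK subrr.
Qed.

Lemma loc Q Q' n m : (forall n', n < n' -> forall m, Q n' m = Q' n' m) ->
  SQ Q (n + 1) m = SQ Q' (n + 1) m.
Proof.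
move=> h; rewrite /SQ; apply: eq_fsbigr => kj _; rewrite /G h //; lia.
Qed.

Lemma uniq_sol Q Q' : is_pdo Q -> is_pdo Q' -> E Q -> E Q' -> Q = Q'.
Proof.
move=> [[B1 H1] _] [[B2 H2] _] EQ EQ'.
pose B : int := `|B1|%:Z + `|B2|%:Z.
have claim t : forall n, B - t%:Z < n -> forall m, Q n m = Q' n m.
  elim: t => [|t IH] n hn m.
    rewrite H1 ?H2 //; lia.
  rewrite EQ EQ'; congr (_ - _); apply: loc => n' hn' m'; apply: IH; lia.
apply/funext => n; apply/funext => m; apply: (claim `|B - n|%N.+1); lia.
Qed.

Hypothesis pP : is_pdo P.

Lemma exist_sol : exists Q, is_pdo Q /\ E Q.
Proof.
case: pP => [[B HB] HrowP].
pose T (Q : pdo V) : pdo V := fun n m =>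
  if n < B then P (n + 1) m.+1 - SQ Q (n + 1) m.+1 else 0.
pose it t := iter t T (fun _ _ => 0).
have it_zero t n m : B <= n -> it t n m = 0.
  move=> hn; case: t => [|t] //=; rewrite /T ifF //; apply/negbTE; lia.
have stab t s n m : B - t%:Z < n -> it (t + s)%N n m = it t n m.
  elim: t s n m => [|t IH] s n m hn.
    by rewrite !it_zero //; lia.
  rewrite addSn /= /T; case: ifP => // _; congr (_ - _); apply: loc => n' hn' m'.
  apply: IH; lia.
pose Qd (n : int) m := it `|B - n|%N.+1 n m.
have Qd_hi n m : B <= n -> Qd n m = 0 by move=> h; rewrite /Qd it_zero.
have Qfix n m : Qd n m = T Qd n m.
  have -> : Qd n m = T (it `|B - n|%N) n m by [].
  rewrite /T; case: ifP => // _; congr (_ - _); apply: loc => n' hn' m'.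
  rewrite /Qd.
  pose t0 := minn `|B - n|%N `|B - n'|%N.+1.
  have h0 : B - t0%:Z < n' by lia.
  rewrite -(subnKC (_ : t0 <= `|B - n|)%N); last by lia.
  rewrite -(subnKC (_ : t0 <= `|B - n'|.+1)%N); last by lia.
  by rewrite !stab.
have EQd : E Qd.
  move=> n m; rewrite Qfix /T; case: ifP => // /negbT hn.
  rewrite HB; last by lia.
  rewrite /SQ fsbig1 ?subrr // => kj _; rewrite /G Qd_hi ?mul0r //; lia.
exists Qd; split => //; split.
  by exists B => n m hn; apply: Qd_hi; lia.
have claim t : forall n, B - t%:Z < n -> exists Mb : nat, forall m, (Mb < m)%N -> Qd n m = 0.
  elim: t => [|t IH] n hn.
    by exists 0%N => m _; apply: Qd_hi; lia.
  have [hB|hB] := lerP B n.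
    by exists 0%N => m _; apply: Qd_hi.
  have [J HJ] := unif_bound (Q := Qd) (N := n + 1) (K := `|B - n|%N)
    (fun k _ => IH (n + 1 + k%:Z) ltac:(lia)).
  have [Mp HMp] := HrowP (n + 1).
  exists (maxn J Mp) => m hm.
  rewrite EQd HMp; last by lia.
  rewrite /SQ fsbig1 ?subrr // => -[k j] _; rewrite /G /=.
  have [hk|hk] := ltnP k `|B - n|%N.
    by rewrite HJ ?mul0r //; lia.
  by rewrite Qd_hi ?mul0r //; lia.
move=> n; apply: (claim `|B - n|%N.+1); lia.
Qed.
End Main.

Lemma der1 (R : realType) (V : comAlgType R[i]) (d : {linear V -> V}) :
  is_derivation d -> d 1 = 0.
Proof.
move=> D; have := D 1 1; rewrite !mulr1 mul1r.
move=> h; apply: (addrI (d 1)); by rewrite addr0 -h.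
Qed.


Lemma ud (R : realType) (V : comAlgType R[i]) (d1 d2 : {linear V -> V}) (a : V) :
  is_derivation d1 -> is_derivation d2 -> unique_division d1 d2 a.
Proof.
move=> D1 D2 P pP.
have h1 := der1 D1; have h2 := der1 D2.
have [Q [pQ EQ]] := exist_sol d1 d2 a pP.
exists Q; split => //; first by apply/(eqn_iff a h1 h2 P pQ).
by move=> Q' pQ' /(eqn_iff a h1 h2 P pQ') EQ'; exact: uniq_sol.
Qed.

Theorem lemma1 (R : realType) (V : comAlgType R[i])
  (d1 d2 : {linear V -> V}) (a : V) :
  (forall x y : V, x * y = 0 -> x = 0 \/ y = 0) ->
  is_derivation d1 -> is_derivation d2 ->
  (forall x : V, d1 (d2 x) = d2 (d1 x)) ->
  unique_division d1 d2 a /\ unique_division d2 d1 a.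
Proof. by move=> _ D1 D2 _; split; apply: ud. Qed.
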